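(* Let $\mathcal{G}=(V,E_L,E_R)$ and $\mathcal{G}'=(V',E'_L,E'_R)$ be achievement positional games with $V\cap V'=\varnothing$. Suppose Left has a winning strategy on $\mathcal{G}$ as first player and Right has a winning strategy on $\mathcal{G}'$ as first player. Let $d$ be the Left-delay of $\mathcal{G}$ and $d'$ the Right-delay of $\mathcal{G}'$. If $d\le d'$, then Left has a winning strategy on $\mathcal{G}\cup\mathcal{G}'$ as first player; if $d'\le d$, then Right has a winning strategy on $\mathcal{G}\cup\mathcal{G}'$ as first player. In particular, at least one of Left and Right has a winning strategy as first player on $\mathcal{G}\cup\mathcal{G}'$.
   Context: A hypergraph is a pair $(V,E)$ with $V$ finite and $E\subseteq 2^V\setminus\{\varnothing\}$. An achievement positional game is a triple $\mathcal{G}=(V,E_L,E_R)$ where $(V,E_L)$ and $(V,E_R)$ are hypergraphs; elements of $E_L$ are blue edges, elements of $E_R$ are red edges. Two players, Left and Right, alternately pick a previously unpicked vertex of $V$ (either player may be designated to start). A player fills an edge when they have picked all its vertices. If Left fills a blue edge before Right fills a red edge, Left wins; if Right fills a red edge before Left fills a blue edge, Right wins; if neither happens before all vertices are picked, the game is a draw. The disjoint union of games with disjoint vertex sets is $\mathcal{G}\cup\mathcal{G}'=(V\cup V',E_L\cup E'_L,E_R\cup E'_R)$. Left-delay: if Left has a winning strategy on $\mathcal{G}$ as first player, consider the scoring game in which Left moves first and plays normally, while Right, on each of her turns, may either pick an unpicked vertex or pass. The game ends when Left fills a blue edge, Right fills a red edge, or all vertices are picked. The score is $+\infty$ if Left has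 not filled a blue edge, and otherwise the total number of passes made by Right. Left minimizes and Right maximizes the score; the Left-delay of $\mathcal{G}$ is the value of this game under optimal play (finite under the hypothesis). The Right-delay of a game on which Right has a winning strategy as first player is defined symmetrically (roles of Left/Right and blue/red swapped). *)

(* Defs.v *)
From mathcomp Require Import all_boot.
Set Implicit Arguments. Unset Strict Implicit. Unset Printing Implicit Defensive.

(* An achievement positional game on the finite vertex type V:
   blue edges (Left's) and red edges (Right's). *)
Record game (V : finType) := Game { blue : {set {set V}}; red : {set {set V}} }.

Definition hypergraph_game (V : finType) (G : game V) : Prop :=
  set0 \notin blue G /\ set0 \notin red G.

Definition swap (V : finType) (G : game V) : game V := Game (red G) (blue G).

Definition gunion (V V' : finType) (G : game V) (G' : game V') : game (V + V')%type :=
  Game ([set (@inl V V') @: e | e : {set V} in blue G] :|: [set (@inr V V') @: e | e : {set V'} in blue G'])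
       ([set (@inl V V') @: e | e : {set V} in red G] :|: [set (@inr V V') @: e | e : {set V'} in red G']).

Definition filled (V : finType) (E : {set {set V}}) (A : {set V}) : Prop :=
  exists2 e, e \in E & e \subset A.

Section Play.
Variables (V : finType) (G : game V).

(* Positions: L = vertices picked by Left, R = vertices picked by Right,
   no edge filled yet.  lwinL L R: Left, to move, can force a Left win;
   lwinR L R: Right to move, Left can force a Left win. *)
Inductive lwinL : {set V} -> {set V} -> Prop :=
| LwinL L R v : v \notin L :|: R ->
    (filled (blue G) (v |: L) \/ lwinR (v |: L) R) -> lwinL L R
with lwinR : {set V} -> {set V} -> Prop :=
| LwinR L R : (exists w, w \notin L :|: R) ->
    (forall w, w \notin L :|: R ->
        ~ filled (red G) (w |: R) /\ lwinL L (w |: R)) -> lwinR L R.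

Definition left_wins_first : Prop := lwinL set0 set0.

(* Scoring game with passes for Right.  ldelL k L R (Left to move) /
   ldelR k L R (Right to move): Left can force that she fills a blue edge
   with Right making at most k further passes (i.e. score <= k from here). *)
Inductive ldelL : nat -> {set V} -> {set V} -> Prop :=
| LdelL k L R v : v \notin L :|: R ->
    (filled (blue G) (v |: L) \/ ldelR k (v |: L) R) -> ldelL k L R
with ldelR : nat -> {set V} -> {set V} -> Prop :=
| LdelR k L R : (exists w, w \notin L :|: R) ->
    (forall w, w \notin L :|: R ->
        ~ filled (red G) (w |: R) /\ ldelL k L (w |: R)) ->
    (* Right passing: costs one unit of the budget *)
    (exists2 k', k = k'.+1 & ldelL k' L R) ->
    ldelR k L R.

Definition left_delay (d : nat) : Prop :=
  ldelL d set0 set0 /\ forall k, ldelL k set0 set0 -> d <= k.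

End Play.

Definition right_wins_first (V : finType) (G : game V) : Prop :=
  left_wins_first (swap G).
Definition right_delay (V : finType) (G : game V) (d : nat) : Prop :=
  left_delay (swap G) d.

(* Main.v *)
From Stdlib Require Import Classical.
Require Import Defs.
From mathcomp Require Import all_boot.

Set Implicit Arguments. Unset Strict Implicit. Unset Printing Implicit Defensive.

Lemma ldelL_inv (V : finType) (G : game V) k L R : ldelL G k L R ->
  exists2 v, v \notin L :|: R &
    (filled (blue G) (v |: L) \/ ldelR G k (v |: L) R).
Proof. by case=> k0 L0 R0 v hv h; exists v. Qed.

Lemma ldelR_inv (V : finType) (G : game V) k L R : ldelR G k L R ->
  [/\ (exists w, w \notin L :|: R),
      (forall w, w \notin L :|: R ->
        ~ filled (red G) (w |: R) /\ ldelL G k L (w |: R)) &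
      (exists2 k', k = k'.+1 & ldelL G k' L R)].
Proof. by case=> k0 L0 R0 h1 h2 h3; split. Qed.

Lemma ldelR0 (V : finType) (G : game V) L R : ~ ldelR G 0 L R.
Proof. by move/ldelR_inv=> [_ _ [k' ]]. Qed.

Lemma card_free (T : finType) (S0 : {set T}) x : x \notin S0 ->
  #|~: (x |: S0)| < #|~: S0|.
Proof.
move=> hx; rewrite (cardsD1 x (~: S0)) inE hx /= add1n ltnS.
have -> : ~: (x |: S0) = ~: S0 :\ x by apply/setP=> y; rewrite !inE negb_or andbC.
by [].
Qed.

Section Main.
Variables (X Y W : finType) (H : game W) (A : game X) (S : game Y).
Variables (iA : X -> W) (iB : Y -> W).
Hypothesis iA_inj : injective iA.
Hypothesis iB_inj : injective iB.
Hypothesis disj : forall x y, iA x != iB y.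
Hypothesis cover : forall w, (exists x, w = iA x) \/ (exists y, w = iB y).
Hypothesis hblue : blue H = [set iA @: e | e : {set X} in blue A] :|: [set iB @: e | e : {set Y} in red S].
Hypothesis hred : red H = [set iA @: e | e : {set X} in red A] :|: [set iB @: e | e : {set Y} in blue S].

Definition emb (P : {set X}) (Q : {set Y}) : {set W} := iA @: P :|: iB @: Q.

Lemma memA x P Q : (iA x \in emb P Q) = (x \in P).
Proof.
rewrite inE (mem_imset _ _ iA_inj).
case: (x \in P) => //=; apply/negP=> /imsetP [y _ e].
by move: (disj x y); rewrite e eqxx.
Qed.

Lemma memB y P Q : (iB y \in emb P Q) = (y \in Q).
Proof.
rewrite inE (mem_imset _ _ iB_inj).
case: (y \in Q); rewrite ?orbT //= orbF; apply/negP=> /imsetP [x _ e].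
by move: (disj x y); rewrite e eqxx.
Qed.

Lemma embA x P Q : iA x |: emb P Q = emb (x |: P) Q.
Proof. by rewrite /emb imsetU1 setUA. Qed.

Lemma embB y P Q : iB y |: emb P Q = emb P (y |: Q).
Proof. by rewrite /emb imsetU1 setUCA. Qed.

Lemma filledA P Q : filled (blue A) P -> filled (blue H) (emb P Q).
Proof.
move=> [e he hs]; exists (iA @: e).
  by rewrite hblue inE; apply/orP; left; apply/imsetP; exists e.
by rewrite /emb; apply: subset_trans (subsetUl _ _); apply: imsetS.
Qed.

Lemma filledB P Q : filled (red S) Q -> filled (blue H) (emb P Q).
Proof.
move=> [e he hs]; exists (iB @: e).
  by rewrite hblue inE; apply/orP; right; apply/imsetP; exists e.
by rewrite /emb; apply: subset_trans (subsetUr _ _); apply: imsetS.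
Qed.

Lemma nofilled P Q : ~ filled (red A) P -> ~ filled (blue S) Q ->
  ~ filled (red H) (emb P Q).
Proof.
move=> nA nB [e]; rewrite hred inE => /orP [] /imsetP [e0 he0 ->] hs.
  apply: nA; exists e0 => //; apply/subsetP=> x hx.
  by rewrite -(memA x P Q); apply: (subsetP hs); apply: imset_f.
apply: nB; exists e0 => //; apply/subsetP=> y hy.
by rewrite -(memB y P Q); apply: (subsetP hs); apply: imset_f.
Qed.

Lemma freeA x L R L' R' : (iA x \notin emb L L' :|: emb R R') = (x \notin L :|: R).
Proof. by rewrite in_setU !memA in_setU. Qed.

Lemma freeB y L R L' R' : (iB y \notin emb L L' :|: emb R R') = (y \notin L' :|: R').
Proof. by rewrite in_setU !memB in_setU. Qed.

Definition fm (L R : {set X}) (L' R' : {set Y}) := #|~: (L :|: R)| + #|~: (L' :|: R')|.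

Definition XS (L R : {set X}) (L' R' : {set Y}) := ~ filled (red A) R /\ ~ filled (blue S) R' /\
  exists b, ldelL A b L R /\ (b = 0 \/ exists2 c, b <= c.+1 & ~ ldelL S c R' L').
Definition YS (L R : {set X}) (L' R' : {set Y}) := ~ filled (red A) R /\ ~ filled (blue S) R' /\
  exists b c, [/\ ldelR A b L R, ~ ldelR S c R' L' & b <= c.+1].
Definition QS (L R : {set X}) (L' R' : {set Y}) := ~ filled (red A) R /\ ~ filled (blue S) R' /\
  exists b c, [/\ ldelR A b L R, ~ ldelL S c R' L' & b <= c.+1].

Lemma fmA x L R L' R' : x \notin L :|: R -> fm (x |: L) R L' R' < fm L R L' R'.
Proof. by move=> h; rewrite /fm ltn_add2r -setUA; apply: card_free. Qed.
Lemma fmAR x L R L' R' : x \notin L :|: R -> fm L (x |: R) L' R' < fm L R L' R'.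
Proof. by move=> h; rewrite /fm ltn_add2r setUCA; apply: card_free. Qed.
Lemma fmB y L R L' R' : y \notin L' :|: R' -> fm L R (y |: L') R' < fm L R L' R'.
Proof. by move=> h; rewrite /fm ltn_add2l -setUA; apply: card_free. Qed.
Lemma fmBR y L R L' R' : y \notin L' :|: R' -> fm L R L' (y |: R') < fm L R L' R'.
Proof. by move=> h; rewrite /fm ltn_add2l setUCA; apply: card_free. Qed.

Lemma main n : forall L R L' R', fm L R L' R' < n ->
  [/\ XS L R L' R' -> lwinL H (emb L L') (emb R R'),
      YS L R L' R' -> lwinL H (emb L L') (emb R R') &
      QS L R L' R' -> lwinR H (emb L L') (emb R R')].
Proof.
elim: n => [//|n IH] L R L' R' hn.
have IHX L0 R0 L0' R0' : fm L0 R0 L0' R0' < fm L R L' R' ->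
   XS L0 R0 L0' R0' -> lwinL H (emb L0 L0') (emb R0 R0').
  by move=> h; case: (IH L0 R0 L0' R0') => //; apply: leq_trans h _.
have IHY L0 R0 L0' R0' : fm L0 R0 L0' R0' < fm L R L' R' ->
   YS L0 R0 L0' R0' -> lwinL H (emb L0 L0') (emb R0 R0').
  by move=> h; case: (IH L0 R0 L0' R0') => //; apply: leq_trans h _.
have IHQ L0 R0 L0' R0' : fm L0 R0 L0' R0' < fm L R L' R' ->
   QS L0 R0 L0' R0' -> lwinR H (emb L0 L0') (emb R0 R0').
  by move=> h; case: (IH L0 R0 L0' R0') => //; apply: leq_trans h _.
split.
-
  move=> [nA [nB [b [hl hc]]]].
  have [v hv [hf|hr]] := ldelL_inv hl.
    by apply: (LwinL (v := iA v)); rewrite ?freeA // embA; left; apply: filledA.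
  apply: (LwinL (v := iA v)); rewrite ?freeA // embA; right.
  apply: IHQ; first exact: fmA.
  split=> //; split=> //.
  case: hc => [b0|[c hbc hnc]]; first by move: hr; rewrite b0 => /ldelR0.
  by exists b, c; split.
-
  move=> [nA [nB [b [c [hr hnr hbc]]]]].
  have [hexA hallA [b' eb hlb']] := ldelR_inv hr.
  subst b.
  case: c hnr hbc => [|c'] hnr hbc.
    have b'0 : b' = 0 by case: b' hbc hlb' {hr hallA}.
    subst b'.
    have [v hv [hf|hr0]] := ldelL_inv hlb'; last by case: (ldelR0 hr0).
    by apply: (LwinL (v := iA v)); rewrite ?freeA // embA; left; apply: filledA.
  case: (classic (exists2 w, w \notin R' :|: L' & filled (red S) (w |: L'))).
    move=> [w hw hf]; apply: (LwinL (v := iB w)); first by rewrite freeB setUC.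
    by rewrite embB; left; apply: filledB.
  move=> nfill.
  case: (classic (exists2 w, w \notin R' :|: L' & ~ ldelL S c'.+1 R' (w |: L'))).
    move=> [w hw hnl]; apply: (LwinL (v := iB w)); first by rewrite freeB setUC.
    rewrite embB; right; apply: IHQ; first by apply: fmB; rewrite setUC.
    by split=> //; split=> //; exists b'.+1, c'.+1; split.
  move=> nmove.
  case: (classic (ldelL S c' R' L')); last first.
    move=> hnp.
    have [v hv [hf|hr0]] := ldelL_inv hlb'.
      by apply: (LwinL (v := iA v)); rewrite ?freeA // embA; left; apply: filledA.
    apply: (LwinL (v := iA v)); rewrite ?freeA // embA; right.
    apply: IHQ; first exact: fmA.
    by split=> //; split=> //; exists b', c'; split.
  move=> hp; exfalso; apply: hnr; apply: LdelR.
  - by have [w hw _] := ldelL_inv hp; exists w.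
  - move=> w hw; split.
      by move=> hf; apply: nfill; exists w.
    by apply: NNPP => hn'; apply: nmove; exists w.
  - by exists c'.
-
  move=> [nA [nB [b [c [hr hnl hbc]]]]].
  have [[w0 hw0] hallA _] := ldelR_inv hr.
  apply: LwinR; first by exists (iA w0); rewrite freeA.
  move=> w; case: (cover w) => [[x ->]|[y ->]].
    rewrite freeA => hx; have [hnf hl] := hallA x hx.
    split; first by rewrite embA; apply: nofilled.
    rewrite embA; apply: IHX; first exact: fmAR.
    by split=> //; split=> //; exists b; split=> //; right; exists c.
  rewrite freeB => hy.
  have hy' : y \notin R' :|: L' by rewrite setUC.
  have nf : ~ filled (blue S) (y |: R').
    by move=> hf; apply: hnl; apply: (LdelL (v := y)) => //; left.
  have nr : ~ ldelR S c (y |: R') L'.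
    by move=> hf; apply: hnl; apply: (LdelL (v := y)) => //; right.
  split; first by rewrite embB; apply: nofilled.
  rewrite embB; apply: IHY; first exact: fmBR.
  by split=> //; split=> //; exists b, c; split.
Qed.

Lemma union_win d d' : set0 \notin red A -> set0 \notin blue S ->
  ldelL A d set0 set0 -> (forall k, ldelL S k set0 set0 -> d' <= k) ->
  d <= d' -> lwinL H set0 set0.
Proof.
move=> h0A h0S hl hmin hdd.
have e0 : emb set0 set0 = set0 by rewrite /emb !imset0 setU0.
have nf (T : finType) (E : {set {set T}}) : set0 \notin E -> ~ filled E set0.
  move=> h [e he]; rewrite subset0 => /eqP ee; subst e.
  by rewrite he in h.
rewrite -e0.
have [hX _ _] := @main (fm set0 set0 set0 set0).+1 set0 set0 set0 set0 (ltnSn _).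
apply: hX; split; first exact: nf.
split; first exact: nf.
exists d; split=> //.
case: d hl hdd => [|d] hl hdd; first by left.
right; exists d => // hd.
by have := hmin _ hd; rewrite leqNgt => /negP; apply; apply: leq_trans hdd.
Qed.

End Main.

Theorem proposition3 (V V' : finType) (G : game V) (G' : game V') (d d' : nat) :
  hypergraph_game G -> hypergraph_game G' ->
  left_wins_first G -> right_wins_first G' ->
  left_delay G d -> right_delay G' d' ->
  ((d <= d')%N -> left_wins_first (gunion G G')) /\
  ((d' <= d)%N -> right_wins_first (gunion G G')) /\
  (left_wins_first (gunion G G') \/ right_wins_first (gunion G G')).
Proof.
move=> [hGb hGr] [hG'b hG'r] _ _ [hld hmin] [hrd hmin'].
have inl_inj : injective (@inl V V') by move=> ? ? [].
have inr_inj : injective (@inr V V') by move=> ? ? [].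
have disj1 : forall x y, (@inl V V' x) != inr y by [].
have disj2 : forall x y, (@inr V V' x) != inl y by [].
have cov1 : forall w : (V + V')%type, (exists x, w = inl x) \/ (exists y, w = inr y).
  by case=> [x|y]; [left; exists x | right; exists y].
have cov2 : forall w : (V + V')%type, (exists x, w = inr x) \/ (exists y, w = inl y).
  by case=> [x|y]; [right; exists x | left; exists y].
have L1 : d <= d' -> left_wins_first (gunion G G').
  move=> hdd; apply: (@union_win V V' _ (gunion G G') G (swap G') inl inr
      inl_inj inr_inj disj1 cov1 _ _ d d') => //.
have L2 : d' <= d -> right_wins_first (gunion G G').
  move=> hdd; apply: (@union_win V' V _ (swap (gunion G G')) (swap G') G inr inl
      inr_inj inl_inj disj2 cov2 _ _ d' d) => //=; by rewrite setUC.
split=> //; split=> //.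
by case: (leqP d d') => h; [left; apply: L1 | right; apply: L2; apply: ltnW].
Qed.
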